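(* Let $k\ge3$ and $A,B\in\mathbb F_2^{k\times k}$. Suppose (1) the $k\times 2k$ matrix $[A\,|\,B]$ has rank $k$, and (2) $AEB^T+BE^{-T}A^T=0$ for every $E\in GL(k,\mathbb F_2)$. Then $A=0$ or $B=0$.
   Context: Arithmetic over $\mathbb F_2$; $E^{-T}=(E^{-1})^T$. *)

(* Defs.v *)
From mathcomp Require Import all_boot all_order all_algebra.
Set Implicit Arguments.
Unset Strict Implicit.
Unset Printing Implicit Defensive.

(* Main.v *)
Require Import Defs.
From mathcomp Require Import all_boot all_order all_algebra.
Import GRing.Theory.
Local Open Scope ring_scope.
Set Implicit Arguments. Unset Strict Implicit.
Lemma F2x (x : 'F_2) : x + x = 0.
Proof. by rewrite -{1}(oppr_pchar2 (pchar_Fp (isT : prime 2)) x) addNr. Qed.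
Lemma F2n (x : 'F_2) : x != 0 -> x = 1.
Proof. case: x => [[|[|m]] i] //=; try by apply/val_inj.
 by move=> _; apply/val_inj.
Qed.
Lemma mxx m n (M : 'M['F_2]_(m,n)) : M + M = 0.
Proof. by apply/matrixP=> a b; rewrite !mxE F2x. Qed.
Lemma mx_eq m n (M N : 'M['F_2]_(m,n)) : M + N = 0 -> M = N.
Proof. by move=> h; rewrite -[M]addr0 -(mxx N) addrA h add0r. Qed.
Lemma inv_of n (E F : 'M['F_2]_n) : E *m F = 1%:M -> E \in unitmx /\ invmx E = F.
Proof. move=> h; have [uE _] := mulmx1_unit h; split=> //.
by rewrite -[invmx E]mulmx1 -h mulmxA mulVmx // mul1mx. Qed.

Section S.
Variables (k : nat) (A B : 'M['F_2]_k).
Definition Phi (X : 'M['F_2]_k) := A *m X *m B^T.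
Lemma PhiD X Y : Phi (X + Y) = Phi X + Phi Y.
Proof. by rewrite /Phi mulmxDr mulmxDl. Qed.
Hypothesis hE : forall E : 'M['F_2]_k, E \in unitmx ->
          A *m E *m B^T + B *m (invmx E)^T *m A^T = 0.
Lemma hE' E F : E *m F = 1%:M -> Phi E = (Phi F)^T.
Proof. move=> /inv_of [uE iE]; have := hE uE; rewrite iE /Phi => /mx_eq ->.
by rewrite !trmx_mul trmxK mulmxA. Qed.
Lemma sym1 : (Phi 1%:M)^T = Phi 1%:M.
Proof. by rewrite -(hE' (mulmx1 1%:M)). Qed.
Lemma symij i j : i != j -> (Phi (delta_mx i j))^T = Phi (delta_mx i j).
Proof.
move=> ij; have ji : j != i by rewrite eq_sym.
have h : (1%:M + delta_mx i j) *m (1%:M + delta_mx i j) = 1%:M :> 'M['F_2]_k.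
  rewrite mulmxDl !mulmxDr !mul1mx mulmx1 mul_delta_mx_cond (negbTE ji) mulr0n addr0.
  by rewrite -addrA mxx addr0.
have := hE' h; rewrite !PhiD linearD /= sym1 => /addrI h2; by rewrite {2}h2.
Qed.
Lemma diagT i j : i != j -> Phi (delta_mx i i) = (Phi (delta_mx j j))^T.
Proof.
move=> ij; have ji : j != i by rewrite eq_sym.
have h : (1%:M + delta_mx i i + delta_mx i j + delta_mx j i) *m
  (1%:M + delta_mx i j + delta_mx j i + delta_mx j j) = 1%:M :> 'M['F_2]_k.
  rewrite !mulmxDl !mulmxDr !mul1mx !mulmx1 !mul_delta_mx_cond !eqxx (negbTE ij) (negbTE ji) !mulr0n !addr0.
  apply/matrixP=> a b; rewrite !mxE.
  have [->|ai] := eqVneq a i; have [->|bi] := eqVneq b i;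
  try (have [->|aj] := eqVneq a j); try (have [->|bj] := eqVneq b j);
  rewrite ?eqxx ?(negbTE ij) ?(negbTE ji) ?(negbTE ai) ?(negbTE bi) ?(negbTE aj) ?(negbTE bj) /= ?F2x //;
  rewrite ?(eq_sym i) ?(eq_sym j) ?(negbTE ai) ?(negbTE bi) ?(negbTE aj) ?(negbTE bj) /= ?F2x //;
  try case: (b == j); try case: (a == b); rewrite ?(addr0, add0r) ?addrA; do 3? rewrite ?F2x ?add0r //.
have := hE' h; rewrite !PhiD !linearD /= sym1 (symij ij) (symij ji) -!addrA => /addrI.
by rewrite [in RHS]addrA [in RHS]addrC => /addIr.
Qed.
Lemma symall (hk : (3 <= k)%N) i j : (Phi (delta_mx i j))^T = Phi (delta_mx i j).
Proof.
have [ij|] := eqVneq i j; last exact: symij.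
subst j.
have [j [l [ij [il jl]]]] : exists j l : 'I_k, [/\ i != j, i != l & j != l].
  have h0 : (0 < k)%N by apply: leq_trans hk.
  have h1 : (1 < k)%N by apply: leq_trans hk.
  have h2 : (2 < k)%N by [].
  case: i => [[|[|m]] im].
  - by exists (Ordinal h1), (Ordinal h2).
  - by exists (Ordinal h0), (Ordinal h2).
  - by exists (Ordinal h0), (Ordinal h1).
rewrite {1}(diagT ij) trmxK.
by rewrite (diagT jl) (diagT il).
Qed.

Lemma PhiE i j r s : Phi (delta_mx i j) r s = A r i * B s j.
Proof.
rewrite /Phi -(mul_delta_mx (0 : 'I_1)) mulmxA -colE -mulmxA -rowE.
by rewrite !mxE big_ord1 !mxE.
Qed.
End S.
Theorem mainTheorem9 (k : nat) (hk : (3 <= k)%N) (A B : 'M['F_2]_k)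
  (hrank : \rank (row_mx A B) = k)
  (hE : forall E : 'M['F_2]_k, E \in unitmx ->
          A *m E *m B^T + B *m (invmx E)^T *m A^T = 0) :
  A = 0 \/ B = 0.
Proof.
have key r s i j : A r i * B s j = A s i * B r j.
  have /matrixP/(_ s r) := symall hE hk i j.
  by rewrite mxE !PhiE.
have [->|nA] := eqVneq A 0; first by left.
have [->|nB] := eqVneq B 0; first by right.
exfalso.
have [[r0 p] /F2n Ar0p] : exists ij : 'I_k * 'I_k, A ij.1 ij.2 != 0.
  apply/existsP; apply: contraR nA => /existsPn h.
  by apply/eqP/matrixP=> a b; rewrite mxE; have := h (a, b); rewrite negbK => /eqP.
have [[s0 q] /F2n Bs0q] : exists ij : 'I_k * 'I_k, B ij.1 ij.2 != 0.
  apply/existsP; apply: contraR nB => /existsPn h.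
  by apply/eqP/matrixP=> a b; rewrite mxE; have := h (a, b); rewrite negbK => /eqP.
have eA : A = col q B *m row s0 A.
  apply/matrixP=> a b; rewrite !mxE big_ord1 !mxE.
  by rewrite -[A a b]mulr1 -Bs0q key mulrC.
have eB : B = col q B *m (A s0 p *: row r0 B).
  apply/matrixP=> a b; rewrite !mxE big_ord1 !mxE.
  have e1 : B a b = A a p * B r0 b by rewrite -[B a b]mul1r -Ar0p key.
  have e2 : A a p = B a q * A s0 p by rewrite -[A a p]mulr1 -Bs0q key mulrC.
  by rewrite e1 e2 mulrA.
have : (\rank (row_mx A B) <= 1)%N.
  have -> : row_mx A B = col q B *m row_mx (row s0 A) (A s0 p *: row r0 B).
    by rewrite mul_mx_row -eA -eB.
  exact: leq_trans (mxrankM_maxl _ _) (rank_leq_col _).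
by rewrite hrank; move=> h; move: hk; rewrite leqNgt (leq_ltn_trans h).
Qed.
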